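(* Let $m<M$ be real numbers and let $x_1,\dots,x_n$ be real numbers with $m\le x_i\le M$ for $i=1,\dots,n$, not all equal. Let $m_r=\frac1n\sum_{i=1}^n(x_i-\bar x)^r$ with $\bar x=\frac1n\sum_{i=1}^n x_i$, let $S=\sqrt{m_2}$, and define $\alpha_3=\sqrt{m_3^2/m_2^3}$, $\alpha_4=m_4/m_2^2$ and $q=(M-m)/S$. Then $$\alpha_4-\alpha_3^2\le\frac{q^2}{4}.$$
   Context: $\alpha_3$ (skewness), $\alpha_4$ (kurtosis) and $q$ (studentized range) are as defined in the claim; $m_r$ is the $r$-th central moment of the numbers $x_1,\dots,x_n$. *)

(* Defs.v *)
From mathcomp Require Import all_boot all_order all_algebra.
Set Implicit Arguments. Unset Strict Implicit. Unset Printing Implicit Defensive.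
Import Order.TTheory GRing.Theory Num.Theory.
Local Open Scope ring_scope.

(* Data x_1..x_n indexed by 'I_n; R a real closed field (so that sqrt exists). *)
Definition mean (R : rcfType) (n : nat) (x : 'I_n -> R) : R :=
  (\sum_(i < n) x i) / n%:R.

Definition cmoment (R : rcfType) (n : nat) (x : 'I_n -> R) (r : nat) : R :=
  (\sum_(i < n) (x i - mean x) ^+ r) / n%:R.

Definition stddev (R : rcfType) (n : nat) (x : 'I_n -> R) : R :=
  Num.sqrt (cmoment x 2).

Definition alpha3 (R : rcfType) (n : nat) (x : 'I_n -> R) : R :=
  Num.sqrt (cmoment x 3 ^+ 2 / cmoment x 2 ^+ 3).

Definition alpha4 (R : rcfType) (n : nat) (x : 'I_n -> R) : R :=
  cmoment x 4 / cmoment x 2 ^+ 2.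

Definition studentized_range (R : rcfType) (n : nat) (x : 'I_n -> R) (m M : R) : R :=
  (M - m) / stddev x.

(* Main.v *)
Require Import Defs.
From mathcomp Require Import all_boot all_order all_algebra.
From mathcomp Require Import ring lra.
Import Order.TTheory GRing.Theory Num.Theory.
Local Open Scope ring_scope.

Lemma final (R : rcfType) (N s2 s3 s4 K m M : R) :
  0 < N -> 0 < s2 -> 0 <= (s3 / N) ^+ 2 / (s2 / N) ^+ 3 ->
  K = (M - m) ^+ 2 / 4%:R ->
  s4 * s2 - s3 ^+ 2 <= K * s2 ^+ 2 ->
  s4 / N / (s2 / N) ^+ 2 - Num.sqrt ((s3 / N) ^+ 2 / (s2 / N) ^+ 3) ^+ 2 <=
  ((M - m) / Num.sqrt (s2 / N)) ^+ 2 / 4%:R.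
Proof.
move=> N0 s2pos h23 -> key.
rewrite (sqr_sqrtr h23) [((M - m) / _) ^+ 2]expr_div_n sqr_sqrtr; last by rewrite divr_ge0 ?ltW.
rewrite -subr_ge0.
have -> : (M - m) ^+ 2 / (s2 / N) / 4%:R -
   (s4 / N / (s2 / N) ^+ 2 - (s3 / N) ^+ 2 / (s2 / N) ^+ 3)
   = N * ((M - m) ^+ 2 / 4%:R * s2 ^+ 2 - (s4 * s2 - s3 ^+ 2)) / s2 ^+ 3.
  by field; rewrite gt_eqF // gt_eqF.
apply: divr_ge0; last by rewrite exprn_ge0 // ltW.
apply: mulr_ge0; first exact: ltW.
by rewrite subr_ge0.
Qed.

Theorem corollary2p5 (R : rcfType) (n : nat) (x : 'I_n -> R) (m M : R) :
  m < M ->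
  (forall i, m <= x i <= M) ->
  (exists i j, x i != x j) ->
  alpha4 x - alpha3 x ^+ 2 <= studentized_range x m M ^+ 2 / 4%:R.
Proof.
move=> hmM hx [i0 [j0 hij]].
set mu := mean x.
pose y i := x i - mu.
have cm r : cmoment x r = (\sum_i y i ^+ r) / n%:R by [].
set s2 := \sum_i y i ^+ 2.
set s3 := \sum_i y i ^+ 3.
set s4 := \sum_i y i ^+ 4.
have n0 : (0 < n)%N by apply: leq_ltn_trans (leq0n i0) (ltn_ord i0).
have N0 : 0 < n%:R :> R by rewrite ltr0n.
have s2pos : 0 < s2.
  rewrite lt0r sumr_ge0 ?andbT => [|i _]; last exact: sqr_ge0.
  apply/negP => /eqP /psumr_eq0P H.
  have Hy k : x k = mu.
    have := H (fun i _ => sqr_ge0 _) k isT => /eqP; rewrite sqrf_eq0 subr_eq0 => /eqP //.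
  by move: hij; rewrite !Hy eqxx.
set a := (m + M) / 2%:R - mu.
set K := (M - m) ^+ 2 / 4%:R.
have hk i : y i ^+ 2 * (y i - a) ^+ 2 <= K * y i ^+ 2.
  have e : y i - a = x i - (m + M) / 2%:R by rewrite /y /a; ring.
  rewrite e mulrC; apply: ler_wpM2r; first exact: sqr_ge0.
  have /andP [h1 h2] := hx i.
  rewrite /K; nra.
have hsum : s4 - (a * 2%:R) * s3 + a ^+ 2 * s2 <= K * s2.
  have -> : s4 - (a * 2%:R) * s3 + a ^+ 2 * s2 =
            \sum_i y i ^+ 2 * (y i - a) ^+ 2.
    rewrite /s4 /s3 /s2 !mulr_sumr -sumrB -big_split /=.
    by apply: eq_bigr => i _; ring.
  rewrite /s2 mulr_sumr; exact: ler_sum.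
have key : s4 * s2 - s3 ^+ 2 <= K * s2 ^+ 2.
  have : 0 <= (a * s2 - s3) ^+ 2 by exact: sqr_ge0.
  have := ler_wpM2l (ltW s2pos) hsum.
  nra.
rewrite /alpha4 /alpha3 /studentized_range /stddev !cm -/s2 -/s3 -/s4.
have h23 : 0 <= (s3 / n%:R) ^+ 2 / (s2 / n%:R) ^+ 3.
  by rewrite divr_ge0 ?sqr_ge0 // exprn_ge0 // divr_ge0 // ?ltW.
exact: (@final R _ _ _ _ K m M N0 s2pos h23 (erefl K) key).
Qed.
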